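(* For $0\le i\le n$, $dp(0,i)=(0,\pi_0)$ is the smallest pair in $DP_i$, and it is the only pair in $DP_i$ whose second component equals $\pi_0$.
   Context: Let $x_0\le x_1\le\cdots\le x_{n+1}$ be real numbers, $\{x\}=x-\lfloor x\rfloor$, and let $\pi=(\pi_0,\dots,\pi_{n+1})$ be the permutation of $\{0,\dots,n+1\}$ such that for $0\le i<j\le n+1$, $\pi_i>\pi_j$ iff $(\{x_i\},-x_i,i)<(\{x_j\},-x_j,j)$ lexicographically. For a sequence of indices $s_0<\cdots<s_k$, a drop is a consecutive pair $(s_{h-1},s_h)$ with $\pi_{s_{h-1}}>\pi_{s_h}$. For $0\le h\le i\le n$, $dp(h,i)$ is the pair $(d(h,i),p(h,i))$, where $d(h,i)$ is the minimum number of drops over all sequences of $h+1$ indices $0=s_0<s_1<\cdots<s_h\le i$, and $p(h,i)$ is the minimum of $\pi_{s_h}$ over all such sequences having exactly $d(h,i)$ drops. Let $DP_i=\{dp(h,i)\mid 0\le h\le i\}$. Pairs are compared lexicographically. *)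

(* Defs.v *)
From HB Require Import structures.
From mathcomp Require Import all_boot all_order all_algebra.
From mathcomp Require Import reals.
Set Implicit Arguments. Unset Strict Implicit. Unset Printing Implicit Defensive.
Import Order.TTheory GRing.Theory Num.Theory.
Local Open Scope ring_scope.

Definition fracp (R : realType) (x : R) : R := x - (Num.floor x)%:~R.

Definition key_lt (R : realType) (x : nat -> R) (i j : nat) : bool :=
  (fracp (x i) < fracp (x j)) ||
  ((fracp (x i) == fracp (x j)) &&
   ((- x i < - x j) || ((- x i == - x j) && (i < j)%N))).

Definition is_perm_upto (n : nat) (pi : nat -> nat) : Prop :=
  (forall i, (i <= n.+1)%N -> (pi i <= n.+1)%N) /\
  (forall i j, (i <= n.+1)%N -> (j <= n.+1)%N -> pi i = pi j -> i = j).

Definition drops (pi : nat -> nat) (s : seq nat) : nat :=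
  count (fun p : nat * nat => (pi p.2 < pi p.1)%N) (zip s (behead s)).

Definition valid_seq (h i : nat) (s : seq nat) : bool :=
  [&& size s == h.+1, head 1%N s == 0%N, sorted ltn s & all (fun t => t <= i)%N s].

Definition is_dp (pi : nat -> nat) (h i : nat) (dp : nat * nat) : Prop :=
  let: (d, p) := dp in
  [/\ (exists2 s, valid_seq h i s & drops pi s = d),
      (forall s, valid_seq h i s -> (d <= drops pi s)%N),
      (exists2 s, valid_seq h i s & (drops pi s = d /\ pi (last 0%N s) = p)) &
      (forall s, valid_seq h i s -> drops pi s = d -> (p <= pi (last 0%N s))%N)].

Definition in_DP (pi : nat -> nat) (i : nat) (dp : nat * nat) : Prop :=
  exists2 h, (h <= i)%N & is_dp pi h i dp.

Definition pair_le (a b : nat * nat) : bool :=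
  (a.1 < b.1)%N || ((a.1 == b.1) && (a.2 <= b.2)%N).

(* Main.v *)
Require Import Defs.
From HB Require Import structures.
From mathcomp Require Import all_boot all_order all_algebra.
From mathcomp Require Import reals.
Import Order.TTheory GRing.Theory Num.Theory.
Local Open Scope ring_scope.

Lemma drops0_le (pi : nat -> nat) (t : seq nat) (a : nat) :
  drops pi (a :: t) = 0%N -> (pi a <= pi (last a t))%N.
Proof.
elim: t a => [|b t IH] a //=.
rewrite /drops /=.
case: ltnP => //= hab h.
apply: leq_trans hab (IH b _).
by rewrite /drops /=.
Qed.

Lemma valid0 (h i : nat) (s : seq nat) : valid_seq h i s ->
  exists t, s = 0%N :: t.
Proof.
case: s => [|a t] /andP [_ /andP [/= /eqP e _]] //.
by exists t; rewrite e.
Qed.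

Lemma last_pos (t : seq nat) (a : nat) : sorted ltn (a :: t) -> t <> [::] ->
  (a < last a t)%N.
Proof.
elim: t a => [|b t IH] a //= /andP [hab hs] _.
case: t IH hs => [|c t] IH hs //=.
apply: ltn_trans hab _. exact: (IH b hs).
Qed.

Arguments valid0 {h i s}.
Arguments last_pos {t a}.

Theorem lemma7 (R : realType) (n : nat) (x : nat -> R) (pi : nat -> nat)
  (hx : forall k, (k <= n)%N -> x k <= x k.+1)
  (hperm : is_perm_upto n pi)
  (hpi : forall i j, (i < j)%N -> (j <= n.+1)%N ->
           ((pi j < pi i)%N <-> key_lt x i j))
  (i : nat) (hi : (i <= n)%N) :
  is_dp pi 0 i (0%N, pi 0%N) /\
  (forall dp, in_DP pi i dp -> pair_le (0%N, pi 0%N) dp) /\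
  (forall dp, in_DP pi i dp -> dp.2 = pi 0%N -> dp = (0%N, pi 0%N)).
Proof.
have v0 : valid_seq 0 i [:: 0%N] by rewrite /valid_seq /=.
split.
  split.
  - by exists [:: 0%N].
  - by [].
  - by exists [:: 0%N].
  - move=> s vs _; have [t st] := valid0 vs; subst s.
    by case: t vs => [|b t] // /andP [].
split.
  move=> [d p] [h hh [_ _ [s vs [ds ps]] _]].
  rewrite /pair_le /=; case: d ds => [|d] ds //=.
  have [t st] := valid0 vs; subst s.
  rewrite -ps; move: (drops0_le _ _ _ ds) => /= -> //.
move=> [d p] [h hh [_ _ [s vs [ds ps]] _]] /= hp; rewrite hp in ps; subst p.
have [t st] := valid0 vs; subst s.
case: t vs ds ps => [|b t] vs ds ps.
  by rewrite -ds.
exfalso.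
case/and4P: vs => _ _ hs hall.
have hlt : (0 < last 0 (b :: t))%N := last_pos hs (fun e => match e with end).
have hle : (last 0%N (b :: t) <= i)%N.
  move/allP: hall; apply; exact: mem_last.
case: hperm => _ inj.
have := inj _ _ (leq_trans hle (leq_trans hi (leqnSn _))) (leq0n _) ps.
move=> e; move: hlt; rewrite e; rewrite ltnn; move=> hf; discriminate hf.
Qed.
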